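(* Every closed ball $B(p,r)$ of $(\mathbb H,d_\alpha)$ is a convex subset of $\mathbb R^3$ in the Euclidean sense.
   Context: $\mathbb H=\mathbb R^3$ with group law $(x,y,z)\cdot(x',y',z')=(x+x',y+y',z+z'+\tfrac12(xy'-yx'))$ and dilations $\delta_\lambda(x,y,z)=(\lambda x,\lambda y,\lambda^2z)$. Fix $\alpha>0$ such that $d_\alpha(p,q)=\inf\{r>0:\delta_{1/r}(p^{-1}\cdot q)\in B_\alpha\}$ is a distance on $\mathbb H$, where $B_\alpha$ is the closed Euclidean ball of radius $\alpha$ centered at $0$. $B(p,r)=\{q:d_\alpha(q,p)\le r\}$. *)

(* Defs.v *)
From Stdlib Require Import Reals.
Open Scope R_scope.

Definition pt : Type := (R * R * R)%type.

Definition hmul (p q : pt) : pt :=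
  let '(x, y, z) := p in let '(x', y', z') := q in
  (x + x', y + y', z + z' + / 2 * (x * y' - y * x')).

Definition hinv (p : pt) : pt := let '(x, y, z) := p in (- x, - y, - z).

Definition dil (l : R) (p : pt) : pt :=
  let '(x, y, z) := p in (l * x, l * y, l * l * z).

Definition in_Balpha (alpha : R) (p : pt) : Prop :=
  let '(x, y, z) := p in x * x + y * y + z * z <= alpha * alpha.

Definition Dset (alpha : R) (p q : pt) (r : R) : Prop :=
  r > 0 /\ in_Balpha alpha (dil (/ r) (hmul (hinv p) q)).

Definition is_inf (S : R -> Prop) (m : R) : Prop :=
  (forall r, S r -> m <= r) /\ (forall b, (forall r, S r -> b <= r) -> b <= m).

Definition is_distance (d : pt -> pt -> R) : Prop :=
  (forall p q, 0 <= d p q) /\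
  (forall p q, d p q = 0 <-> p = q) /\
  (forall p q, d p q = d q p) /\
  (forall p q s, d p s <= d p q + d q s).

Definition comb (t : R) (p q : pt) : pt :=
  let '(x, y, z) := p in let '(x', y', z') := q in
  ((1 - t) * x + t * x', (1 - t) * y + t * y', (1 - t) * z + t * z').

Definition euclid_convex (A : pt -> Prop) : Prop :=
  forall p q t, A p -> A q -> 0 <= t <= 1 -> A (comb t p q).

(* Main.v *)
Require Import Defs.
From Stdlib Require Import Reals Lra Psatz.
Open Scope R_scope.

Lemma ball_convex (alpha : R) u v t :
  in_Balpha alpha u -> in_Balpha alpha v -> 0 <= t <= 1 ->
  in_Balpha alpha (comb t u v).
Proof.
  destruct u as [[x y] z]; destruct v as [[x' y'] z']; simpl.
  intros Hu Hv Ht.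
  assert (E : ((1 - t) * x + t * x') * ((1 - t) * x + t * x') +
    ((1 - t) * y + t * y') * ((1 - t) * y + t * y') +
    ((1 - t) * z + t * z') * ((1 - t) * z + t * z') =
    (1 - t) * (x*x+y*y+z*z) + t * (x'*x'+y'*y'+z'*z')
    - t * (1 - t) * ((x-x')*(x-x') + (y-y')*(y-y') + (z-z')*(z-z'))) by ring.
  rewrite E.
  assert (0 <= t * (1 - t)) by nra.
  assert (0 <= (x-x')*(x-x') + (y-y')*(y-y') + (z-z')*(z-z')).
  { pose proof (Rle_0_sqr (x-x')); pose proof (Rle_0_sqr (y-y'));
    pose proof (Rle_0_sqr (z-z')); unfold Rsqr in *; lra. }
  assert (0 <= t * (1 - t) * ((x-x')*(x-x') + (y-y')*(y-y') + (z-z')*(z-z'))).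
  { apply Rmult_le_pos; assumption. }
  nra.
Qed.

Lemma aff (k : R) p q q' t :
  dil k (hmul (hinv p) (comb t q q')) =
  comb t (dil k (hmul (hinv p) q)) (dil k (hmul (hinv p) q')).
Proof.
  destruct p as [[a b] c]; destruct q as [[x y] z]; destruct q' as [[x' y'] z'].
  simpl. f_equal; [f_equal|]; ring.
Qed.

Lemma mono alpha w s s' : 0 < s -> s <= s' ->
  in_Balpha alpha (dil (/ s) w) -> in_Balpha alpha (dil (/ s') w).
Proof.
  intros Hs Hss'.
  assert (Hk : 0 < / s' <= / s).
  { split. apply Rinv_0_lt_compat; lra. apply Rinv_le_contravar; lra. }
  set (k := / s') in *; set (k' := / s) in *.
  destruct w as [[x y] z]; simpl.
  assert (H1 : k * k <= k' * k') by nra.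
  assert (H2 : (k*k)*(k*k) <= (k'*k')*(k'*k')) by nra.
  assert (A1 : (k*x)*(k*x) <= (k'*x)*(k'*x)).
  { replace ((k*x)*(k*x)) with ((k*k)*(x*x)) by ring.
    replace ((k'*x)*(k'*x)) with ((k'*k')*(x*x)) by ring.
    apply Rmult_le_compat_r; nra. }
  assert (A2 : (k*y)*(k*y) <= (k'*y)*(k'*y)).
  { replace ((k*y)*(k*y)) with ((k*k)*(y*y)) by ring.
    replace ((k'*y)*(k'*y)) with ((k'*k')*(y*y)) by ring.
    apply Rmult_le_compat_r; nra. }
  assert (A3 : (k*k*z)*(k*k*z) <= (k'*k'*z)*(k'*k'*z)).
  { replace ((k*k*z)*(k*k*z)) with (((k*k)*(k*k))*(z*z)) by ring.
    replace ((k'*k'*z)*(k'*k'*z)) with (((k'*k')*(k'*k'))*(z*z)) by ring.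
    apply Rmult_le_compat_r; nra. }
  lra.
Qed.

Theorem proposition2p2 (alpha : R) (halpha : alpha > 0)
  (d : pt -> pt -> R)
  (hd : forall p q, is_inf (Dset alpha p q) (d p q))
  (hdist : is_distance d) :
  forall (p : pt) (r : R), euclid_convex (fun q => d q p <= r).
Proof.
  destruct hdist as [Hnn [_ [Hsym _]]].
  intros p r q q' t Hq Hq' Ht.
  rewrite Hsym in Hq, Hq' |- *.
  assert (Hr : 0 <= r) by (pose proof (Hnn p q); lra).
  assert (fwd : forall w, d p w <= r -> forall s, s > r ->
            in_Balpha alpha (dil (/ s) (hmul (hinv p) w))).
  { intros w Hw s Hs.
    destruct (hd p w) as [Hlb Hglb].
    destruct (Rlt_or_le (d p w) s) as [Hlt|Hle]; [|lra].
    assert (exists s', Dset alpha p w s' /\ s' < s) as [s' [[Hs'0 Hs'] Hs's]].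
    { apply Classical_Prop.NNPP; intro Hn.
      assert (s <= d p w).
      { apply Hglb; intros r0 Hr0.
        destruct (Rle_or_lt s r0) as [|Hl]; [auto|].
        exfalso; apply Hn; eauto. }
      lra. }
    eapply mono; [exact Hs'0| lra| exact Hs']. }
  destruct (hd p (comb t q q')) as [Hlb _].
  apply Rnot_lt_le; intro Hlt.
  set (s := (r + d p (comb t q q')) / 2).
  assert (Hs : r < s < d p (comb t q q')) by (unfold s; lra).
  assert (HD : Dset alpha p (comb t q q') s).
  { split; [lra|]. rewrite aff. apply ball_convex; auto; apply fwd; auto; lra. }
  apply Hlb in HD. lra.
Qed.
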